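(* Let $F$ be the elementary cellular automaton with rule number 172. For every nonempty finite word $u\in\{0,1\}^*$, the deterministic communication complexity of $\textsc{SInv}_{F,u}$ restricted to inputs of length $n$ is bounded by a constant independent of $n$.
   Context: An elementary cellular automaton (ECA) with rule number $N\in\{0,\dots,255\}$ is the map $F:\{0,1\}^{\mathbb Z}\to\{0,1\}^{\mathbb Z}$ given by $F(x)_i=f(x_{i-1},x_i,x_{i+1})$. Here the local rule $f:\{0,1\}^3\to\{0,1\}$ is determined by $N=\sum_{a,b,c\in\{0,1\}}2^{4a+2b+c}f(a,b,c)$. For a nonempty finite word $u$, $p_u\in\{0,1\}^{\mathbb Z}$ is defined by $(p_u)_i=u_{i\bmod |u|}$. For a finite word $x$, $p_u[x]$ is the configuration equal to $x$ on positions $0,\dots,|x|-1$ and to $p_u$ elsewhere. $\textsc{SInv}_{F,u}$ is the decision problem: on input a finite word $x$, decide whether there is an integer $w$ such that for all $t\ge0$ the set of positions where $F^t(p_u)$ and $F^t(p_u[x])$ differ is contained in an interval of length $w$. For each $n$, it is regarded as a function $\{0,1\}^n\to\{0,1\}$. For a function $g:X\times Y\to Z$, $D(g)$ is the minimal depth of a deterministic two-party protocol computing $g$. In such a protocol, Alice knows $x$ and Bob knows $y$. The protocol is a binary tree: each internal node is labelled by a function of Alice's input only or of Bob's input only, with values in $\{\text{left},\text{right}\}$, and each leaf is labelled by an output value. For $g:\{0,1\}^m\to Z$, set $D(g)=\max_{0\le i<m}D(g_i)$, where $g_i:\{0,1\}^i\times\{0,1\}^{m-i}\to Z$ is $g_i(x,y)=g(xy)$.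 *)

(* Defs.v *)
From Stdlib Require Import ZArith List Arith Bool.
Import ListNotations.
Open Scope Z_scope.

Definition eca_local (N : Z) (a b c : bool) : bool :=
  Z.testbit N (4 * Z.b2z a + 2 * Z.b2z b + Z.b2z c).

Definition config := Z -> bool.

Definition eca (N : Z) (x : config) : config :=
  fun i => eca_local N (x (i - 1)) (x i) (x (i + 1)).

Definition eca_iter (N : Z) (t : nat) (x : config) : config :=
  Nat.iter t (eca N) x.

Definition periodic (u : list bool) : config :=
  fun i => nth (Z.to_nat (i mod Z.of_nat (length u))) u false.

Definition patch (u x : list bool) : config :=
  fun i => if (0 <=? i) && (i <? Z.of_nat (length x))
           then nth (Z.to_nat i) x false
           else periodic u i.

Definition SInv (N : Z) (u : list bool) (x : list bool) : Prop :=
  exists w : Z, forall t : nat, exists a : Z, forall i : Z,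
    eca_iter N t (periodic u) i <> eca_iter N t (patch u x) i ->
    a <= i < a + w.

Inductive protocol : Type :=
| Leaf (out : bool)
| AliceNode (q : list bool -> bool) (l r : protocol)
| BobNode (q : list bool -> bool) (l r : protocol).

Fixpoint depth (p : protocol) : nat :=
  match p with
  | Leaf _ => 0
  | AliceNode _ l r | BobNode _ l r => S (Nat.max (depth l) (depth r))
  end.

Fixpoint run (p : protocol) (x y : list bool) : bool :=
  match p with
  | Leaf b => b
  | AliceNode q l r => if q x then run l x y else run r x y
  | BobNode q l r => if q y then run l x y else run r x y
  end.

(* p computes g_i : {0,1}^i x {0,1}^(m-i) -> {0,1}, g_i(x,y) = g(xy),
   where the decision problem g is given as a predicate (output 1 iff true). *)
Definition computes (p : protocol) (g : list bool -> Prop) (m i : nat) : Prop :=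
  forall x y : list bool, length x = i -> length y = (m - i)%nat ->
    (run p x y = true <-> g (x ++ y)).

Definition D_split_le (g : list bool -> Prop) (m i d : nat) : Prop :=
  exists p : protocol, (depth p <= d)%nat /\ computes p g m i.

(* D(g restricted to {0,1}^m) = max_{0<=i<m} D(g_i) <= d *)
Definition D_le (g : list bool -> Prop) (m d : nat) : Prop :=
  forall i : nat, (i < m)%nat -> D_split_le g m i d.

(* Main.v *)
Require Import Defs.
From Stdlib Require Import ZArith List Arith Bool Lia Classical.
Import ListNotations.
Open Scope Z_scope.

Lemma loc172 : forall a b c, eca_local 172 a b c = if a then c else b.
Proof. intros [|] [|] [|]; reflexivity. Qed.

Lemma F_eq : forall x i, eca 172 x i = if x (i-1) then x (i+1) else x i.
Proof. intros; unfold eca; apply loc172. Qed.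

Lemma iter_S : forall t x, eca_iter 172 (S t) x = eca 172 (eca_iter 172 t x).
Proof. reflexivity. Qed.

Lemma iter_Sr : forall t x, eca_iter 172 (S t) x = eca_iter 172 t (eca 172 x).
Proof. induction t; intros x; [reflexivity|]. rewrite iter_S, IHt. reflexivity. Qed.

Definition no00 (x : config) := forall i, ~ (x i = false /\ x (i+1) = false).

Lemma create : forall x i, eca 172 x i = false -> eca 172 x (i+1) = false ->
  (x i = false /\ x (i+1) = false) \/ (x (i+1) = false /\ x (i+1+1) = false).
Proof.
  intros x i H1 H2. rewrite !F_eq in *.
  replace (i+1-1) with i in H2 by lia.
  destruct (x (i-1)), (x i), (x (i+1)), (x (i+1+1)); simpl in *; try discriminate; intuition.
Qed.

Lemma no00_F : forall x, no00 x -> no00 (eca 172 x).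
Proof.
  intros x H i [H1 H2]. destruct (create x i H1 H2) as [?|?];
  [apply (H i)|apply (H (i+1))]; auto.
Qed.

Definition good (y : config) := no00 y /\ forall i, y (i-1) = false -> y (i+1) = true.

Lemma good_shift : forall y, good y -> forall i, eca 172 y i = y (i+1).
Proof.
  intros y [H1 H2] i. rewrite F_eq. destruct (y (i-1)) eqn:E; [reflexivity|].
  rewrite (H2 i E). specialize (H1 (i-1)). replace (i-1+1) with i in H1 by lia.
  destruct (y i); auto.
Qed.

Lemma good_F : forall y, good y -> good (eca 172 y).
Proof.
  intros y Hg. split. apply no00_F, Hg.
  intros i. rewrite !(good_shift y Hg). replace (i-1+1) with (i+1-1) by lia.
  intros E. apply (proj2 Hg) in E. rewrite <- E. f_equal; lia.
Qed.

Lemma no00_good : forall x, no00 x -> good (eca 172 x).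
Proof.
  intros x H. split. apply no00_F, H.
  intros i. rewrite !F_eq.
  replace (i-1+1) with i by lia. replace (i+1-1) with i by lia.
  replace (i-1-1) with (i-2) by lia.
  pose proof (H (i-2)) as A. pose proof (H (i-1)) as B. pose proof (H i) as C.
  pose proof (H (i+1)) as D.
  replace (i-2+1) with (i-1) in A by lia. replace (i-1+1) with i in B by lia.
  replace (i+1+1) with (i+2) in *.
  destruct (x (i-2)), (x (i-1)), (x i), (x (i+1)), (x (i+2)); simpl; intuition.
  lia.
Qed.

Lemma good_iter : forall t y, good y -> forall i, eca_iter 172 t y i = y (i + Z.of_nat t).
Proof.
  induction t; intros y Hg i. simpl. f_equal; lia.
  rewrite iter_Sr, IHt by (apply good_F; auto). rewrite (good_shift y Hg). f_equal; lia.
Qed.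

Lemma patch_out : forall u w i, i < 0 \/ i >= Z.of_nat (length w) -> patch u w i = periodic u i.
Proof.
  intros u w i H. unfold patch.
  destruct (Z.leb_spec 0 i), (Z.ltb_spec i (Z.of_nat (length w))); simpl; auto; lia.
Qed.

Lemma F_agree : forall x y i, x (i-1) = y (i-1) -> x i = y i -> x (i+1) = y (i+1) ->
  eca 172 x i = eca 172 y i.
Proof. intros x y i H1 H2 H3. rewrite !F_eq, H1, H2, H3. reflexivity. Qed.

Lemma barrier : forall X j, X j = false -> X (j+1) = false ->
  eca 172 X j = false /\ eca 172 X (j+1) = false.
Proof.
  intros X j H1 H2. rewrite !F_eq. replace (j+1-1) with j by lia.
  rewrite H1, H2. destruct (X (j-1)); auto.
Qed.

Lemma partB1 : forall u x, no00 (periodic u) -> no00 (patch u x) -> SInv 172 u x.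
Proof.
  intros u x HP HQ. set (n := Z.of_nat (length x)).
  assert (Hout : forall i, i < 0 \/ i >= n -> periodic u i = patch u x i)
    by (intros; symmetry; apply patch_out; auto).
  exists (n + 2). intros [|t].
  - exists (-1). intros i Hd. simpl in Hd.
    destruct (Z_lt_le_dec i 0); [rewrite Hout in Hd by lia; congruence|].
    destruct (Z_lt_le_dec i n); [lia|]. rewrite Hout in Hd by lia; congruence.
  - exists (-1 - Z.of_nat t). intros i Hd.
    rewrite !iter_Sr in Hd.
    rewrite !good_iter in Hd by (apply no00_good; auto).
    destruct (Z_lt_le_dec (i + Z.of_nat t) (-1)).
    + exfalso; apply Hd, F_agree; apply Hout; lia.
    + destruct (Z_lt_le_dec n (i + Z.of_nat t)); [|lia].
      exfalso; apply Hd, F_agree; apply Hout; lia.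
Qed.

Lemma periodic_add : forall u k m, u <> nil ->
  periodic u (k + m * Z.of_nat (length u)) = periodic u k.
Proof.
  intros u k m Hu. unfold periodic. rewrite Z.mod_add; auto.
  destruct u; [congruence|simpl; lia].
Qed.

Lemma partA : forall u x, u <> nil ->
  (exists k, periodic u k = false /\ periodic u (k+1) = false) -> SInv 172 u x.
Proof.
  intros u x Hu [k [Hk1 Hk2]].
  set (p := Z.of_nat (length u)). set (n := Z.of_nat (length x)).
  assert (Hp : p >= 1) by (unfold p; destruct u; [congruence|simpl; lia]).
  set (L := k + (- (Z.abs k + 2)) * p).
  set (R := k + (Z.abs k + n + 1) * p).
  assert (HL : L <= -2) by (unfold L; nia).
  assert (HR : R >= n + 1) by (unfold R, n; nia).
  assert (Hout : forall i, i < 0 \/ i >= n -> periodic u i = patch u x i)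
    by (intros; symmetry; apply patch_out; auto).
  assert (PL : periodic u L = false /\ periodic u (L+1) = false).
  { unfold L. rewrite periodic_add by auto.
    replace (k + - (Z.abs k + 2) * p + 1) with ((k+1) + - (Z.abs k + 2) * p) by lia.
    rewrite periodic_add by auto. auto. }
  assert (PR : periodic u R = false /\ periodic u (R+1) = false).
  { unfold R. rewrite periodic_add by auto.
    replace (k + (Z.abs k + n + 1) * p + 1) with ((k+1) + (Z.abs k + n + 1) * p) by lia.
    rewrite periodic_add by auto. auto. }
  set (Inv := fun (X Y : config) => X L = false /\ X (L+1) = false /\ Y L = false /\ Y (L+1) = false
     /\ X R = false /\ X (R+1) = false /\ Y R = false /\ Y (R+1) = false
     /\ forall i, i < L \/ i > R + 1 -> X i = Y i).
  assert (Hstep : forall X Y, Inv X Y -> Inv (eca 172 X) (eca 172 Y)).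
  { intros X Y (a1&a2&a3&a4&a5&a6&a7&a8&Ha). unfold Inv.
    destruct (barrier X L a1 a2), (barrier Y L a3 a4), (barrier X R a5 a6), (barrier Y R a7 a8).
    repeat (apply conj; [assumption|]).
    intros i Hi. apply F_agree.
    all: clear -Ha a1 a3 a6 a8 Hi; match goal with |- _ ?j = _ ?j =>
      destruct (Z.eq_dec j L) as [E|]; [rewrite E, a1, a3; reflexivity|];
      destruct (Z.eq_dec j (R+1)) as [E'|]; [rewrite E', a6, a8; reflexivity|]; apply Ha; lia end.
    }
  assert (Hall : forall t, Inv (eca_iter 172 t (periodic u)) (eca_iter 172 t (patch u x))).
  { induction t. simpl. unfold Inv.
    destruct PL as [PL1 PL2], PR as [PR1 PR2].
    rewrite <- (Hout L), <- (Hout (L+1)), <- (Hout R), <- (Hout (R+1)) by lia.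
    repeat (apply conj; [assumption|]). intros i Hi; apply Hout; lia.
    rewrite !iter_S. apply Hstep; auto. }
  exists (R + 2 - L). intros t. exists L. intros i Hd.
  destruct (Hall t) as (_&_&_&_&_&_&_&_&Ha).
  destruct (Z_lt_le_dec i L). exfalso; apply Hd, Ha; lia.
  destruct (Z_lt_le_dec (R+1) i). exfalso; apply Hd, Ha; lia. lia.
Qed.

Definition I (y : config) (k : Z) := y k = false /\ y (k+1) = false /\
  forall i, i < k -> ~ (y i = false /\ y (i+1) = false).

Lemma stepA : forall y k, I y k -> y (k-2) = true -> I (eca 172 y) (k-1).
Proof.
  intros y k (H1&H2&H3) H4. split; [|split].
  - rewrite F_eq. replace (k-1-1) with (k-2) by lia. rewrite H4. replace (k-1+1) with k by lia. auto.
  - replace (k-1+1) with k by lia. apply (barrier y k H1 H2).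
  - intros i Hi [A B]. destruct (create y i A B) as [C|C].
    + apply (H3 i); auto; lia.
    + apply (H3 (i+1)); auto; lia.
Qed.

Lemma stepB : forall y k, I y k -> y (k-2) = false -> I (eca 172 y) k /\ eca 172 y (k-2) = true.
Proof.
  intros y k (H1&H2&H3) H4.
  assert (Y1 : y (k-1) = true).
  { destruct (y (k-1)) eqn:E; auto. exfalso. apply (H3 (k-1)); [lia|]. replace (k-1+1) with k by lia. auto. }
  assert (Y3 : y (k-3) = true).
  { destruct (y (k-3)) eqn:E; auto. exfalso. apply (H3 (k-3)); [lia|]. replace (k-3+1) with (k-2) by lia. auto. }
  split; [split; [|split]|].
  - apply (barrier y k H1 H2).
  - apply (barrier y k H1 H2).
  - intros i Hi [A B].
    destruct (Z.eq_dec i (k-1)) as [E|E].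
    + subst i. rewrite F_eq in A. replace (k-1-1) with (k-2) in A by lia. rewrite H4 in A. congruence.
    + destruct (create y i A B) as [C|C].
      * apply (H3 i); auto; lia.
      * apply (H3 (i+1)); auto; lia.
  - rewrite F_eq. replace (k-2-1) with (k-3) by lia. replace (k-2+1) with (k-1) by lia.
    rewrite Y3. auto.
Qed.

Lemma stepGen : forall y k, I y k -> exists k', k' <= k /\ I (eca 172 y) k'.
Proof.
  intros y k H. destruct (y (k-2)) eqn:E.
  - exists (k-1). split; [lia|]. apply stepA; auto.
  - exists k. split; [lia|]. apply stepB; auto.
Qed.

Lemma step2 : forall y k, I y k -> exists k', k' <= k - 1 /\ I (eca 172 (eca 172 y)) k'.
Proof.
  intros y k H. destruct (y (k-2)) eqn:E.
  - destruct (stepGen _ _ (stepA y k H E)) as [k' [? ?]]. exists k'. split; auto; lia.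
  - destruct (stepB y k H E) as [H1 H2]. exists (k-1). split; [lia|]. apply stepA; auto.
Qed.

Lemma iterate : forall y k, I y k -> forall s : nat, exists k', k' <= k - Z.of_nat s /\ I (eca_iter 172 (2*s) y) k'.
Proof.
  intros y k H s. induction s.
  - exists k. split; [simpl; lia|]. exact H.
  - destruct IHs as [k1 [Hk1 HI]]. destruct (step2 _ _ HI) as [k2 [Hk2 HI2]].
    exists k2. split; [lia|]. replace (2 * S s)%nat with (S (S (2*s))) by lia. exact HI2.
Qed.

Lemma perm : forall y k, y k = false -> y (k+1) = false -> forall t,
  eca_iter 172 t y k = false /\ eca_iter 172 t y (k+1) = false.
Proof.
  intros y k H1 H2 t. induction t. simpl; auto. rewrite iter_S. apply barrier; apply IHt.
Qed.

Lemma no00_iter : forall y, no00 y -> forall t, no00 (eca_iter 172 t y).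
Proof. intros y H t. induction t; simpl; auto. apply no00_F; auto. Qed.

Lemma minimal : forall (P : Z -> Prop), (forall j, P j -> -1 <= j) -> (exists j, P j) ->
  exists j, P j /\ forall i, i < j -> ~ P i.
Proof.
  intros P Hb [j Hj].
  assert (forall m : nat, forall j, (Z.to_nat (j+1) <= m)%nat -> P j -> exists j, P j /\ forall i, i < j -> ~ P i).
  { induction m; intros j0 Hm Pj.
    - exists j0. split; auto. intros i Hi Pi. apply Hb in Pi. apply Hb in Pj. lia.
    - destruct (classic (exists i, i < j0 /\ P i)) as [[i [Hi Pi]]|N].
      + apply (IHm i); auto. pose proof (Hb i Pi). pose proof (Hb j0 Pj). lia.
      + exists j0. split; auto. intros i Hi Pi. apply N; eauto. }
  eapply H; eauto.
Qed.

Lemma partB2 : forall u x, no00 (periodic u) -> ~ no00 (patch u x) -> ~ SInv 172 u x.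
Proof.
  intros u x HP HQ [w Hw].
  set (Q := patch u x). set (P := periodic u).
  assert (Hex : exists j, Q j = false /\ Q (j+1) = false).
  { apply NNPP. intro N. apply HQ. intros i Hi. apply N. exists i. auto. }
  destruct (minimal (fun j => Q j = false /\ Q (j+1) = false)) as [k0 [[Hk1 Hk2] Hmin]]; auto.
  { intros j [A B]. destruct (Z_lt_le_dec j (-1)); [|lia]. exfalso. apply (HP j).
    unfold Q in A, B. rewrite patch_out in A, B by lia. auto. }
  assert (HI : I Q k0) by (split; [|split]; auto).
  set (s := (Z.to_nat w + 2)%nat).
  destruct (iterate Q k0 HI s) as [k' [Hk' [A1 [A2 _]]]].
  set (t := (2*s)%nat) in *.
  destruct (Hw t) as [a Ha].
  destruct (perm Q k0 Hk1 Hk2 t) as [B1 B2].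
  pose proof (no00_iter P HP t) as NP.
  assert (D1 : a <= k' + 1).
  { destruct (eca_iter 172 t P k') eqn:E.
    - assert (a <= k' < a + w) by (apply Ha; unfold P, Q in *; congruence). lia.
    - assert (E2 : eca_iter 172 t P (k'+1) = true).
      { destruct (eca_iter 172 t P (k'+1)) eqn:E2; auto. exfalso; apply (NP k'); auto. }
      assert (a <= k'+1 < a + w) by (apply Ha; unfold P, Q in *; congruence). lia. }
  assert (D2 : k0 < a + w).
  { destruct (eca_iter 172 t P k0) eqn:E.
    - assert (a <= k0 < a + w) by (apply Ha; unfold P, Q in *; congruence). lia.
    - assert (E2 : eca_iter 172 t P (k0+1) = true).
      { destruct (eca_iter 172 t P (k0+1)) eqn:E2; auto. exfalso; apply (NP k0); auto. }
      assert (a <= k0+1 < a + w) by (apply Ha; unfold P, Q in *; congruence). lia. }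
  unfold s in Hk'. lia.
Qed.

Fixpoint noz (l : list bool) : bool :=
  match l with
  | a :: ((b :: _) as t) => (a || b) && noz t
  | _ => true
  end.

Lemma noz_nth : forall l, noz l = true <->
  forall k, (S k < length l)%nat -> nth k l false || nth (S k) l false = true.
Proof.
  induction l as [|a l IH]. simpl; split; auto; intros; lia.
  destruct l as [|b l]. simpl; split; auto; intros; lia.
  change (noz (a :: b :: l)) with ((a || b) && noz (b :: l)).
  rewrite andb_true_iff, IH. split.
  - intros [H1 H2] [|k] Hk; simpl in *; auto. apply H2. lia.
  - intros H. split. apply (H 0%nat). simpl; lia.
    intros k Hk. apply (H (S k)). simpl in *; lia.
Qed.

Lemma noz_app : forall l1 a b l2,
  noz ((a :: l1) ++ b :: l2) = noz (a :: l1) && noz (b :: l2) && (last (a :: l1) true || b).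
Proof.
  induction l1 as [|c l1 IH]; intros a b l2.
  - change (noz ([a] ++ b :: l2)) with ((a||b) && noz (b::l2)).
    change (noz [a]) with true. change (last [a] true) with a.
    destruct (noz (b :: l2)); destruct a, b; reflexivity.
  - change ((a :: c :: l1) ++ b :: l2) with (a :: ((c :: l1) ++ b :: l2)).
    change (noz (a :: (c :: l1) ++ b :: l2)) with ((a || c) && noz ((c :: l1) ++ b :: l2)).
    rewrite IH. change (noz (a :: c :: l1)) with ((a||c) && noz (c :: l1)).
    change (last (a :: c :: l1) true) with (last (c :: l1) true).
    destruct (a || c), (noz (c :: l1)), (noz (b :: l2)), (last (c :: l1) true || b); reflexivity.
Qed.

Definition Lst (u w : list bool) := periodic u (-1) :: w ++ [periodic u (Z.of_nat (length w))].

Lemma patch_nth : forall u w i, -1 <= i <= Z.of_nat (length w) ->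
  patch u w i = nth (Z.to_nat (i+1)) (Lst u w) false.
Proof.
  intros u w i Hi. unfold Lst.
  destruct (Z.eq_dec i (-1)) as [->|].
  - rewrite patch_out by lia. reflexivity.
  - replace (Z.to_nat (i+1)) with (S (Z.to_nat i)) by lia. simpl.
    destruct (Z.eq_dec i (Z.of_nat (length w))) as [->|].
    + rewrite patch_out by lia. rewrite Nat2Z.id, app_nth2, Nat.sub_diag by lia. reflexivity.
    + rewrite app_nth1 by lia. unfold patch.
      destruct (Z.leb_spec 0 i), (Z.ltb_spec i (Z.of_nat (length w))); simpl; auto; lia.
Qed.

Lemma no00_noz : forall u w, no00 (periodic u) ->
  (no00 (patch u w) <-> noz (Lst u w) = true).
Proof.
  intros u w HP. rewrite noz_nth.
  assert (HL : length (Lst u w) = (length w + 2)%nat) by (unfold Lst; simpl; rewrite length_app; simpl; lia).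
  rewrite HL. split.
  - intros H k Hk. set (i := Z.of_nat k - 1).
    replace k with (Z.to_nat (i+1)) by lia. replace (S (Z.to_nat (i+1))) with (Z.to_nat (i+1+1)) by lia.
    rewrite <- !patch_nth by lia.
    specialize (H i). destruct (patch u w i), (patch u w (i+1)); auto.
  - intros H i [A B].
    destruct (Z_lt_le_dec i (-1)).
    { apply (HP i). rewrite !patch_out in A, B by lia. auto. }
    destruct (Z_lt_le_dec i (Z.of_nat (length w))).
    + rewrite patch_nth in A, B by lia.
      specialize (H (Z.to_nat (i+1))).
      replace (S (Z.to_nat (i+1))) with (Z.to_nat (i+1+1)) in H by lia.
      rewrite A, B in H. simpl in H. discriminate H. lia.
    + apply (HP i). rewrite !patch_out in A, B by lia. auto.
Qed.

Theorem mainTheorem9 :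
  forall u : list bool, u <> nil ->
    exists C : nat, forall n : nat, D_le (SInv 172%Z u) n C.
Proof.
  intros u Hu. exists 4%nat. intros n i Hi.
  destruct (classic (no00 (periodic u))) as [HB|HA].
  - set (s := periodic u (-1)). set (e := periodic u (Z.of_nat n)).
    exists (AliceNode (fun x => noz (s::x))
       (AliceNode (fun x => last (s::x) true)
          (BobNode (fun y => noz (y++[e])) (Leaf true) (Leaf false))
          (BobNode (fun y => noz (y++[e])) (BobNode (fun y => hd true (y++[e])) (Leaf true) (Leaf false)) (Leaf false)))
       (Leaf false)).
    split. simpl. lia.
    intros x y Hx Hy.
    assert (Hs : SInv 172 u (x ++ y) <-> no00 (patch u (x ++ y))).
    { split. intros H. apply NNPP. intro N. apply (partB2 u (x++y) HB N H).
      apply partB1; auto. }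
    rewrite Hs, no00_noz by auto.
    assert (HL : Lst u (x ++ y) = (s :: x) ++ (y ++ [e])).
    { unfold Lst, s, e. rewrite length_app, Hx, Hy. simpl. rewrite app_assoc.
      do 3 f_equal. f_equal. lia. }
    rewrite HL. cbn [run].
    destruct (y ++ [e]) as [|b l2] eqn:E; [destruct y; discriminate|].
    rewrite noz_app. cbn [hd].
    destruct (noz (s :: x)), (last (s :: x) true), (noz (b :: l2)), b; simpl; split; congruence.
  - assert (Hk : exists k, periodic u k = false /\ periodic u (k+1) = false).
    { apply NNPP. intro N. apply HA. intros k Hk. apply N. eauto. }
    exists (Leaf true). split. simpl. lia.
    intros x y _ _. simpl. split; auto. intros _. apply partA; auto.
Qed.
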